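(* Fix $\lambda\in[0,1)$ and a feasible path flow vector $f$, and let $Z(f,\xi)$ be an integrable random cost. For $\alpha\in(\lambda,1)$ define $$\bar\lambda(\alpha,\lambda)=\frac{\alpha-\lambda}{1+\alpha-2\lambda},\qquad \Phi_{\alpha,\lambda}(f)=\big(1-\bar\lambda(\alpha,\lambda)\big)\mathbb{E}[Z(f,\xi)]+\bar\lambda(\alpha,\lambda)\operatorname{CVaR}_\alpha(Z(f,\xi)).$$ Then $\alpha\mapsto\Phi_{\alpha,\lambda}(f)$ is non-decreasing on $(\lambda,1)$.
   Context: $\operatorname{CVaR}_\alpha(Y):=\inf_{\gamma\in\mathbb{R}}\{\gamma+\frac{1}{1-\alpha}\mathbb{E}[(Y-\gamma)_+]\}$. In the paper $Z(f,\xi)$ is the random TSUE system potential at path flows $f$; the case $\lambda<\alpha$ corresponds to a risk-averse traveler. *)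

(* Defs.v *)
From HB Require Import structures.
From mathcomp Require Import all_boot all_order all_algebra.
From mathcomp Require Import all_classical all_reals all_analysis.
Set Implicit Arguments. Unset Strict Implicit. Unset Printing Implicit Defensive.
Import Order.TTheory GRing.Theory Num.Theory.
Local Open Scope classical_set_scope.
Local Open Scope ring_scope.

Definition CVaR d (T : measurableType d) (R : realType) (P : probability T R)
    (alpha : R) (Y : T -> R) : \bar R :=
  ereal_inf [set (g%:E + ((1 - alpha)^-1)%:E *
                  'E_P[fun w => (Num.max (Y w - g) 0)%R])%E | g in [set: R]].

Definition lambda_bar (R : realType) (alpha lambda : R) : R :=
  (alpha - lambda) / (1 + alpha - 2 * lambda).

Definition Phi d (T : measurableType d) (R : realType) (P : probability T R)
    (alpha lambda : R) (Y : T -> R) : \bar R :=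
  ((1 - lambda_bar alpha lambda)%:E * 'E_P[Y]
   + (lambda_bar alpha lambda)%:E * CVaR P alpha Y)%E.

(* Main.v *)
Require Import Defs.
From HB Require Import structures.
From mathcomp Require Import all_boot all_order all_algebra.
From mathcomp Require Import all_classical all_reals all_analysis.
From mathcomp Require Import ring lra.
Import Order.TTheory GRing.Theory Num.Theory.
Local Open Scope classical_set_scope.
Local Open Scope ring_scope.

Section helpers.
Context d (T : measurableType d) (R : realType) (P : probability T R) (Y : T -> R).
Hypothesis mY : measurable_fun [set: T] Y.
Hypothesis iY : P.-integrable [set: T] (EFin \o Y).

Lemma iYg (g : R) : P.-integrable [set: T] (EFin \o (fun w => Y w - g)).
Proof.
have := integrableB measurableT iY (finite_measure_integrable_cst P g measurableT).
by apply: eq_integrable => // x _.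
Qed.

Lemma EYg (g : R) : (\int[P]_w (Y w - g)%:E = 'E_P[Y] - g%:E)%E.
Proof.
rewrite unlock.
have := integralB_EFin measurableT iY (finite_measure_integrable_cst P g measurableT).
have -> : (\int[P]_(x in [set: T]) (EFin \o cst g) x = g%:E)%E.
  rewrite (_ : EFin \o cst g = cst g%:E) // integral_cst //. have h := @probability_setT _ _ _ P; transitivity (g%:E * 1)%E; [congr (_ * _)%E; exact: h | exact: mule1].
move=> <-.
by apply: eq_integral => x _; rewrite EFinB.
Qed.

Lemma imax (g : R) : P.-integrable [set: T] (EFin \o (fun w => Num.max (Y w - g) 0)).
Proof.
have := integrable_funepos measurableT (iYg g).
by apply: eq_integrable => // x _; rewrite funeposE /= EFin_max.
Qed.

Lemma Emax_fin (g : R) : ('E_P[fun w => (Num.max (Y w - g) 0)%R] \is a fin_num)%E.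
Proof. rewrite unlock; have := integrable_fin_num measurableT (imax g); by []. Qed.

Lemma Emax_ge0 (g : R) : (0 <= 'E_P[fun w => (Num.max (Y w - g) 0)%R])%E.
Proof. by rewrite unlock; apply: integral_ge0 => x _; rewrite lee_fin le_max lexx orbT. Qed.

Lemma Emax_ge (g : R) : ('E_P[Y] - g%:E <= 'E_P[fun w => (Num.max (Y w - g) 0)%R])%E.
Proof.
rewrite -EYg unlock; apply: le_integral => //; first exact: iYg.
  exact: imax.
by move=> x _; rewrite lee_fin le_max lexx.
Qed.


Let e (g : R) : R := fine ('E_P[fun w => (Num.max (Y w - g) 0)%R])%E.
Let Ee (g : R) : ('E_P[fun w => (Num.max (Y w - g) 0)%R] = (e g)%:E)%E.
Proof. by rewrite /e fineK // Emax_fin. Qed.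
Let m : R := fine ('E_P[Y])%E.
Let Em : ('E_P[Y] = m%:E)%E.
Proof. by rewrite /m fineK // unlock; have := integrable_fin_num measurableT iY. Qed.
Let e_ge0 g : 0 <= e g.
Proof. by have := Emax_ge0 g; rewrite Ee lee_fin. Qed.
Let e_ge g : m - g <= e g.
Proof. by have := Emax_ge g; rewrite Ee Em -EFinB lee_fin. Qed.

Lemma CVaR_ge a : 0 <= a -> a < 1 -> (m%:E <= CVaR P a Y)%E.
Proof.
move=> a0 a1; apply/ereal_infP => _ [g _ <-].
rewrite Ee -EFinM -EFinD lee_fin.
have k1 : 1 <= (1 - a)^-1.
  by rewrite invf_ge1 ?subr_gt0 // lerBlDr lerDl.
have := e_ge g; have := e_ge0 g; nra.
Qed.

Lemma CVaR_mono a b : 0 <= a -> a <= b -> b < 1 -> (CVaR P a Y <= CVaR P b Y)%E.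
Proof.
move=> a0 ab b1; apply/ereal_infP => _ [g _ <-].
apply: (@le_trans _ _ ((g%:E + ((1 - a)^-1)%:E * 'E_P[fun w => (Num.max (Y w - g) 0)%R]))%E).
  by apply: ereal_inf_lbound; exists g.
rewrite !Ee -!EFinM -!EFinD lee_fin lerD2l ler_wpM2r //.
rewrite lef_pV2 ?posrE ?subr_gt0 //; last by apply: le_lt_trans b1.
by rewrite lerB.
Qed.

Lemma CVaR_fin a : 0 <= a -> a < 1 -> (CVaR P a Y \is a fin_num)%E.
Proof.
move=> a0 a1.
have ub : (CVaR P a Y <= (0 + (1 - a)^-1 * e 0)%:E)%E.
  apply: ereal_inf_lbound; exists 0 => //.
  by rewrite Ee -EFinM -EFinD.
have lb := CVaR_ge a a0 a1.
move: ub lb; case: (CVaR P a Y) => //.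
Qed.

End helpers.

Lemma lambda_bar_mono (R : realType) (l a b : R) :
  0 <= l -> l < 1 -> l < a -> a <= b ->
  0 <= lambda_bar a l /\ lambda_bar a l <= lambda_bar b l.
Proof.
move=> l0 l1 la ab.
have Da : 0 < 1 + a - 2 * l by lra.
have Db : 0 < 1 + b - 2 * l by lra.
split; first by rewrite /lambda_bar divr_ge0 //; lra.
rewrite /lambda_bar ler_pdivrMr // mulrAC ler_pdivlMr //; nra.
Qed.

Theorem proposition5 (d : measure_display) (T : measurableType d) (R : realType)
    (P : probability T R)
    (Flow : Type) (feasible : Flow -> Prop) (Z : Flow -> T -> R) (f : Flow)
    (lambda : R) :
  0 <= lambda -> lambda < 1 ->
  feasible f ->
  measurable_fun [set: T] (Z f) ->
  P.-integrable [set: T] (EFin \o Z f) ->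
  forall alpha1 alpha2 : R,
    lambda < alpha1 -> alpha1 <= alpha2 -> alpha2 < 1 ->
    (Phi P alpha1 lambda (Z f) <= Phi P alpha2 lambda (Z f))%E.
Proof.
move=> l0 l1 _ mY iY a1 a2 la1 a12 a21.
have a10 : 0 <= a1 by lra.
have a20 : 0 <= a2 by lra.
have a11 : a1 < 1 by lra.
have [lb0 lb12] := @lambda_bar_mono _ _ _ _ l0 l1 la1 a12.
have Em : ('E_P[Z f] = (fine 'E_P[Z f])%:E)%E.
  by rewrite fineK // unlock; have := integrable_fin_num measurableT iY.
have C1 := @CVaR_fin _ _ _ _ _ iY _ a10 a11.
have C2 := @CVaR_fin _ _ _ _ _ iY _ a20 a21.
have G1 := @CVaR_ge _ _ _ _ _ iY _ a10 a11.
have M12 := @CVaR_mono _ _ _ _ _ iY _ _ a10 a12 a21.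
move: C1 C2 G1 M12; rewrite /Phi Em.
move: (CVaR P a1 (Z f)) (CVaR P a2 (Z f)) (fine 'E_P[Z f]) => [c1| |] [c2| |] m //= _ _.
rewrite !lee_fin => G1 M12.
move: lb0 lb12; set lb1 := lambda_bar a1 lambda; set lb2 := lambda_bar a2 lambda => lb0 lb12.
have h1 : lb1 * (c1 - m) <= lb2 * (c1 - m) by apply: ler_wpM2r => //; rewrite subr_ge0.
have h2 : lb2 * (c1 - m) <= lb2 * (c2 - m).
  by apply: ler_wpM2l; [exact: le_trans lb12 | rewrite lerD2r].
move: h1 h2; rewrite !mulrBr !mulrBl !mul1r => h1 h2.
lra.
Qed.
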